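(* The Euclidean Archimedean solid $\{4,6,6\}$ (truncated octahedron) admits orientation-preserving face-pairing isometries, generated by two screw motions $\mathbf{u},\mathbf{v}$, such that the group $\mathbf{G}$ they generate acts freely on $\mathbf{E}^3$ with the truncated octahedron as fundamental domain (three copies meeting at each edge, the 12 edge classes each containing 3 edges, the 24 vertices falling into 6 classes of 4), so that $\mathbf{E}^3/\mathbf{G}$ is a compact orientable Euclidean space form. This group is the crystallographic space group no. 19, $P2_12_12_1$, and has the presentation $$\mathbf{G}=\langle \mathbf{u},\mathbf{v}\mid \mathbf{v}^2\mathbf{u}\mathbf{v}^2\mathbf{u}^{-1}=\mathbf{u}^2\mathbf{v}^{-1}\mathbf{u}^2\mathbf{v}=1\rangle.$$
   Context: The truncated octahedron $\{4,6,6\}$ has 6 squares and 8 regular hexagons, one square and two hexagons at each vertex; it tiles $\mathbf{E}^3$ face-to-face with three copies at every edge. $P2_12_12_1$ denotes the orthorhombic space group generated by three mutually perpendicular screw motions (twofold rotations composed with half-lattice translations) with non-intersecting axes, as in the International Tables for Crystallography. *)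

(* Defs.v *)
From Stdlib Require Import Reals List.
Open Scope R_scope.

Definition V3 : Type := (R * R * R)%type.
Definition vadd (p q : V3) : V3 :=
  let '(x1, y1, z1) := p in let '(x2, y2, z2) := q in (x1 + x2, y1 + y2, z1 + z2).
Definition vsub (p q : V3) : V3 :=
  let '(x1, y1, z1) := p in let '(x2, y2, z2) := q in (x1 - x2, y1 - y2, z1 - z2).
Definition vscale (t : R) (p : V3) : V3 :=
  let '(x, y, z) := p in (t * x, t * y, t * z).
Definition dot (p q : V3) : R :=
  let '(x1, y1, z1) := p in let '(x2, y2, z2) := q in x1 * x2 + y1 * y2 + z1 * z2.
Definition dist2 (p q : V3) : R := dot (vsub p q) (vsub p q).

Definition M3 : Type := (V3 * V3 * V3)%type.
Definition mapply (M : M3) (p : V3) : V3 :=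
  let '(r1, r2, r3) := M in (dot r1 p, dot r2 p, dot r3 p).
Definition det3 (M : M3) : R :=
  let '((a, b, c), (d, e, f), (g, h, i)) := M in
  a * (e * i - f * h) - b * (d * i - f * g) + c * (d * h - e * g).
Definition I3 : M3 := ((1, 0, 0), (0, 1, 0), (0, 0, 1)).

Definition is_rotation (M : M3) : Prop :=
  (forall p q, dot (mapply M p) (mapply M q) = dot p q) /\ det3 M = 1 /\ M <> I3.

Definition is_screw (f : V3 -> V3) : Prop :=
  exists (M : M3) (c d : V3) (t : R),
    is_rotation M /\ dot d d = 1 /\ mapply M d = d /\ t <> 0 /\
    forall x, f x = vadd (vadd (mapply M (vsub x c)) c) (vscale t d).

(** The truncated octahedron {4,6,6} (edge length sqrt 2), in its standard position:
    convex hull of the 24 permutations of (0, +-1, +-2); as an intersection of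
    half-spaces: |x|,|y|,|z| <= 2 (6 squares) and |x|+|y|+|z| <= 3 (8 hexagons). *)
Definition TO (p : V3) : Prop :=
  let '(x, y, z) := p in
  Rabs x <= 2 /\ Rabs y <= 2 /\ Rabs z <= 2 /\ Rabs x + Rabs y + Rabs z <= 3.
Definition TO_interior (p : V3) : Prop :=
  let '(x, y, z) := p in
  Rabs x < 2 /\ Rabs y < 2 /\ Rabs z < 2 /\ Rabs x + Rabs y + Rabs z < 3.

(** Vertices of TO: the permutations of (0, +-1, +-2). *)
Definition TO_vertex (p : V3) : Prop :=
  let '(x, y, z) := p in
  Rabs x + Rabs y + Rabs z = 3 /\ x * y * z = 0 /\ x * x + y * y + z * z = 5.
Definition TO_edge (p q : V3) : Prop :=
  TO_vertex p /\ TO_vertex q /\ dist2 p q = 2.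

(** Words in a set of generators A (letter (a, true) means a^-1), and their
    evaluation as composites of maps: [l1; ...; ln] evaluates to l1 o ... o ln. *)
Definition word (A : Type) : Type := list (A * bool).
Fixpoint evalW {A : Type} (f : A -> bool -> V3 -> V3) (w : word A) (x : V3) : V3 :=
  match w with
  | nil => x
  | (a, b) :: w' => f a b (evalW f w' x)
  end.

Inductive gen2 : Type := GU | GV.
Definition gens2 (u ui v vi : V3 -> V3) (a : gen2) (inv : bool) : V3 -> V3 :=
  match a, inv with
  | GU, false => u | GU, true => ui | GV, false => v | GV, true => vi
  end.

Definition rel1 : word gen2 :=
  (GV, false) :: (GV, false) :: (GU, false) :: (GV, false) :: (GV, false) :: (GU, true) :: nil.
Definition rel2 : word gen2 :=
  (GU, false) :: (GU, false) :: (GV, true) :: (GU, false) :: (GU, false) :: (GV, false) :: nil.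

(** Abstract groups, with a setoid equality (so that quotients such as F_2/N are
    groups in this sense). *)
Record Grp : Type := {
  gcar :> Type;
  geq : gcar -> gcar -> Prop;
  gmul : gcar -> gcar -> gcar;
  ginv : gcar -> gcar;
  gone : gcar;
  geq_refl : forall x, geq x x;
  geq_sym : forall x y, geq x y -> geq y x;
  geq_trans : forall x y z, geq x y -> geq y z -> geq x z;
  gmul_compat : forall x x' y y', geq x x' -> geq y y' -> geq (gmul x y) (gmul x' y');
  ginv_compat : forall x x', geq x x' -> geq (ginv x) (ginv x');
  gmulA : forall x y z, geq (gmul x (gmul y z)) (gmul (gmul x y) z);
  gmul1 : forall x, geq (gmul gone x) x;
  gmulV : forall x, geq (gmul (ginv x) x) gone
}.

Fixpoint evalH (H : Grp) (a b : gcar H) (w : word gen2) : gcar H :=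
  match w with
  | nil => gone H
  | (g, inv) :: w' =>
      gmul H (match g, inv with
              | GU, false => a | GU, true => ginv H a
              | GV, false => b | GV, true => ginv H b end)
           (evalH H a b w')
  end.

(** G = <u, v> has the presentation < u, v | rel1 = rel2 = 1 >: the relators are
    trivial in G, and every word trivial in G is trivial in every group in which
    the relators are trivial (i.e. ker(F_2 -> G) is the normal closure of the
    relators). *)
Definition has_presentation (u ui v vi : V3 -> V3) : Prop :=
  (forall x, evalW (gens2 u ui v vi) rel1 x = x) /\
  (forall x, evalW (gens2 u ui v vi) rel2 x = x) /\
  forall (H : Grp) (a b : gcar H),
    geq H (evalH H a b rel1) (gone H) -> geq H (evalH H a b rel2) (gone H) ->
    forall w : word gen2, (forall x, evalW (gens2 u ui v vi) w x = x) ->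
      geq H (evalH H a b w) (gone H).

(** The standard setting of the space group P2_1 2_1 2_1 (no. 19), International
    Tables, with the lattice normalised to Z^3 (this normalisation is absorbed by
    affine conjugacy): generated by the three screw motions
      (x+1/2, -y+1/2, -z), (-x, y+1/2, -z+1/2), (-x+1/2, -y, z+1/2). *)
Inductive gen3 : Type := S1 | S2 | S3.
Definition std19 (a : gen3) (inv : bool) (p : V3) : V3 :=
  let '(x, y, z) := p in
  match a, inv with
  | S1, false => (x + /2, - y + /2, - z)
  | S1, true  => (x - /2, - y + /2, - z)
  | S2, false => (- x, y + /2, - z + /2)
  | S2, true  => (- x, y - /2, - z + /2)
  | S3, false => (- x + /2, - y, z + /2)
  | S3, true  => (- x + /2, - y, z - /2)
  end.

Definition is_P212121 (u ui v vi : V3 -> V3) : Prop :=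
  exists (A : M3) (p : V3),
    det3 A <> 0 /\
    let phi := fun x => vadd (mapply A x) p in
    (forall w : word gen2, exists w' : word gen3,
        forall x, phi (evalW (gens2 u ui v vi) w x) = evalW std19 w' (phi x)) /\
    (forall w' : word gen3, exists w : word gen2,
        forall x, phi (evalW (gens2 u ui v vi) w x) = evalW std19 w' (phi x)).

(* Main.v *)
Require Import Defs.
From Stdlib Require Import Reals List Lra Lia ZArith Bool FinFun Setoid Morphisms.
Import ListNotations.
Open Scope R_scope.

Inductive Rt := Q0 | Q1 | Q2 | Q3.
Definition elt : Type := (Rt * Z * Z * Z)%type.
Definition IZR3 (p : Z*Z*Z) : V3 := let '(a,b,c) := p in (IZR a, IZR b, IZR c).
Definition rotR (r : Rt) (p : V3) : V3 := let '(x,y,z) := p in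
  match r with Q0 => (x,y,z) | Q1 => (-x,y,-z) | Q2 => (-x,-y,z) | Q3 => (x,-y,-z) end.
Definition transZ (e : elt) : Z*Z*Z := let '(r,A,B,C) := e in
  match r with
  | Q0 => (4*A, 4*B, -8*C)
  | Q1 => (4*A+2, 4*B+2, -8*C+2)
  | Q2 => (4*A, 4*B, -8*C-4)
  | Q3 => (4*A+2, 4*B+2, -8*C-2) end%Z.
Definition rt (e:elt) : Rt := let '(r,_,_,_) := e in r.
Definition appE (e : elt) (p : V3) : V3 := vadd (rotR (rt e) p) (IZR3 (transZ e)).

Definition uf (p : V3) : V3 := let '(x,y,z) := p in (x+2, -y+2, -z-2).
Definition uif (p : V3) : V3 := let '(x,y,z) := p in (x-2, -y+2, -z-2).
Definition vf (p : V3) : V3 := let '(x,y,z) := p in (-x-2, y+2, -z+2).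
Definition vif (p : V3) : V3 := let '(x,y,z) := p in (-x-2, y-2, -z+2).

Definition uL (e:elt) : elt := let '(r,A,B,C) := e in match r with
 | Q0 => (Q3, A, -B, -C) | Q1 => (Q2, A+1, -B, -C)
 | Q2 => (Q1, A, -B, -C) | Q3 => (Q0, A+1, -B, -C) end%Z.
Definition vL (e:elt) : elt := let '(r,A,B,C) := e in match r with
 | Q0 => (Q1, -A-1, B, -C) | Q1 => (Q0, -A-1, B+1, -C)
 | Q2 => (Q3, -A-1, B, -C-1) | Q3 => (Q2, -A-1, B+1, -C-1) end%Z.
Definition decA (e:elt) : elt := let '(r,A,B,C) := e in (r, (A-1)%Z, B, C).
Definition decB (e:elt) : elt := let '(r,A,B,C) := e in (r, A, (B-1)%Z, C).
Definition mulL (a : gen2) (b : bool) (e : elt) : elt :=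
  match a, b with
  | GU, false => uL e | GU, true => decA (uL e)
  | GV, false => vL e | GV, true => decB (vL e) end.
Definition eid : elt := (Q0, 0%Z, 0%Z, 0%Z).
Fixpoint elemOf (w : word gen2) : elt :=
  match w with nil => eid | (a,b) :: w' => mulL a b (elemOf w') end.

Lemma v3eq (a b c a' b' c' : R) : a=a' -> b=b' -> c=c' -> (a,b,c) = (a',b',c').
Proof. intros; subst; reflexivity. Qed.

Ltac zr := repeat (rewrite ?plus_IZR, ?minus_IZR, ?mult_IZR, ?opp_IZR; try progress (rewrite plus_IZR || rewrite minus_IZR || rewrite mult_IZR || rewrite opp_IZR)).
Ltac zr2 := repeat (first [rewrite plus_IZR | rewrite minus_IZR | rewrite mult_IZR | rewrite opp_IZR]).

Lemma letter_ok a b e p :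
  gens2 uf uif vf vif a b (appE e p) = appE (mulL a b e) p.
Proof.
  destruct e as [[[r A] B] C]; destruct p as [[x y] z].
  destruct a, b, r;
  cbv beta iota zeta delta [gens2 appE uf uif vf vif mulL uL vL decA decB rotR vadd IZR3 transZ rt];
  apply v3eq; zr2; ring.
Qed.

Lemma evalW_elem w p : evalW (gens2 uf uif vf vif) w p = appE (elemOf w) p.
Proof.
  induction w as [|[a b] w IH]; simpl.
  - destruct p as [[x y] z]; cbv beta iota zeta delta [appE eid rotR vadd IZR3 transZ rt].
    apply v3eq; zr2; ring.
  - rewrite IH. apply letter_ok.
Qed.

Close Scope R_scope.

Add Parametric Relation (H : Grp) : (gcar H) (geq H)
  reflexivity proved by (geq_refl H) symmetry proved by (geq_sym H)
  transitivity proved by (geq_trans H) as geq_rel.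
Add Parametric Morphism (H : Grp) : (gmul H) with signature
  (geq H) ==> (geq H) ==> (geq H) as gmul_mor.
Proof. intros; apply gmul_compat; auto. Qed.
Add Parametric Morphism (H : Grp) : (ginv H) with signature
  (geq H) ==> (geq H) as ginv_mor.
Proof. intros; apply ginv_compat; auto. Qed.

Section GT.
Variable H : Grp.
Local Infix "*" := (gmul H).
Local Infix "==" := (geq H) (at level 70).
Local Notation "x ^-1" := (ginv H x) (at level 2).
Local Notation one := (gone H).

Lemma mA x y z : x * (y * z) == (x * y) * z. Proof. apply gmulA. Qed.
Lemma m1l x : one * x == x. Proof. apply gmul1. Qed.
Lemma mVl x : x^-1 * x == one. Proof. apply gmulV. Qed.

Ltac ar := repeat setoid_rewrite <- mA.

Lemma mVr x : x * x^-1 == one.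
Proof.
  rewrite <- (m1l (x * x^-1)).
  rewrite <- (mVl (x^-1)) at 1.
  ar. rewrite (mA (x^-1) x (x^-1)), mVl, m1l. apply mVl.
Qed.
Lemma m1r x : x * one == x.
Proof. rewrite <- (mVl x). rewrite mA, mVr. apply m1l. Qed.
Lemma cancl x y : x^-1 * (x * y) == y.
Proof. rewrite mA, mVl; apply m1l. Qed.
Lemma cancr x y : x * (x^-1 * y) == y.
Proof. rewrite mA, mVr; apply m1l. Qed.
Lemma inv_uniq x y : x * y == one -> y == x^-1.
Proof. intro E. rewrite <- (cancl x y), E. apply m1r. Qed.
Lemma invinv x : (x^-1)^-1 == x.
Proof. symmetry. apply inv_uniq. apply mVl. Qed.
Lemma inv1 : one^-1 == one.
Proof. symmetry; apply inv_uniq. apply m1l. Qed.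

Lemma conj_inv g h k : g * h == k * g -> g * h^-1 == k^-1 * g.
Proof.
  intro E. rewrite <- (cancl k (g * h^-1)). apply gmul_compat; [reflexivity|].
  rewrite mA, <- E. ar. rewrite mVr, m1r. reflexivity.
Qed.

Fixpoint npow (g : gcar H) (n : nat) : gcar H :=
  match n with O => one | S n => g * npow g n end.
Definition zpow (g : gcar H) (n : Z) : gcar H :=
  if Z.leb 0 n then npow g (Z.to_nat n) else npow (g^-1) (Z.to_nat (- n)).

Lemma npow_compat g g' n : g == g' -> npow g n == npow g' n.
Proof. intro E; induction n; simpl; [reflexivity|]. apply gmul_compat; auto. Qed.

Lemma zpow0 g : zpow g 0 == one. Proof. reflexivity. Qed.

Lemma zpow_succ g n : zpow g (n + 1) == g * zpow g n.
Proof.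
  unfold zpow. destruct (Z.leb_spec 0 n).
  - destruct (Z.leb_spec 0 (n+1)); [|lia].
    replace (Z.to_nat (n+1)) with (S (Z.to_nat n)) by lia. reflexivity.
  - destruct (Z.leb_spec 0 (n+1)).
    + assert (n = -1)%Z by lia. subst. simpl. rewrite m1r. symmetry; apply mVr.
    + replace (Z.to_nat (- n)) with (S (Z.to_nat (- (n + 1)))) by lia.
      simpl. symmetry; apply cancr.
Qed.

Lemma zpow_pred g n : zpow g (n - 1) == g^-1 * zpow g n.
Proof.
  replace n with ((n - 1) + 1)%Z at 2 by lia. rewrite zpow_succ.
  symmetry; apply cancl.
Qed.

Lemma zpow_ind (P : Z -> Prop) :
  P 0%Z -> (forall n, P n -> P (n+1)%Z) -> (forall n, P n -> P (n-1)%Z) -> forall n, P n.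
Proof.
  intros H0 HS HP n. induction n using Z.peano_ind; auto.
  - apply HS in IHn. unfold Z.succ. auto.
  - apply HP in IHn. unfold Z.pred. replace (n + -1)%Z with (n-1)%Z by lia. auto.
Qed.

Lemma zpow_add g m n : zpow g (m + n) == zpow g m * zpow g n.
Proof.
  revert m. apply zpow_ind.
  - simpl. symmetry; apply m1l.
  - intros m IH. replace (m + 1 + n)%Z with ((m + n) + 1)%Z by lia.
    rewrite !zpow_succ, IH. apply mA.
  - intros m IH. replace (m - 1 + n)%Z with ((m + n) - 1)%Z by lia.
    rewrite !zpow_pred, IH. apply mA.
Qed.

Lemma zpow_inv g n : zpow (g^-1) n == zpow g (- n).
Proof.
  unfold zpow. destruct (Z.leb_spec 0 n); destruct (Z.leb_spec 0 (- n)).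
  - assert (n = 0%Z) by lia. subst. reflexivity.
  - replace (Z.to_nat (- - n)) with (Z.to_nat n) by lia. reflexivity.
  - apply npow_compat. apply invinv.
  - lia.
Qed.

Lemma zpow_conj g h k n : g * h == k * g -> g * zpow h n == zpow k n * g.
Proof.
  intro E. assert (E' := conj_inv _ _ _ E). revert n. apply zpow_ind.
  - rewrite zpow0, zpow0, m1r, m1l; reflexivity.
  - intros n IH. rewrite !zpow_succ. rewrite mA, E. ar. rewrite IH. reflexivity.
  - intros n IH. rewrite !zpow_pred. rewrite mA, E'. ar. rewrite IH. reflexivity.
Qed.

Lemma zpow_comm g h m n : g * h == h * g -> zpow g m * zpow h n == zpow h n * zpow g m.
Proof.
  intro E. assert (E1 : zpow h n * g == g * zpow h n).
  { symmetry. apply zpow_conj. exact E. }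
  symmetry. apply zpow_conj. exact E1.
Qed.

Lemma zpow_1 g : zpow g 1 == g. Proof. unfold zpow; simpl. apply m1r. Qed.
Lemma zpow_m1 g : zpow g (-1) == g^-1. Proof. unfold zpow; simpl. apply m1r. Qed.

End GT.

Open Scope R_scope.

Close Scope R_scope.

Section Pres.
Variable H : Grp.
Local Infix "*" := (gmul H).
Local Infix "==" := (geq H) (at level 70).
Local Notation "x ^-1" := (ginv H x) (at level 2).
Local Notation one := (gone H).
Variables a b : gcar H.
Hypothesis h1 : geq H (evalH H a b rel1) (gone H).
Hypothesis h2 : geq H (evalH H a b rel2) (gone H).

Ltac ar := repeat setoid_rewrite <- mA.

Lemma zf x y x' y' : x * y == x' * y' -> forall z, x * (y * z) == x' * (y' * z).
Proof. intros E z. rewrite !mA, E. reflexivity. Qed.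

Definition X := a * a.
Definition Y := b * b.
Definition c := a * b.
Definition W := c * c.

Lemma aa z : a * (a * z) == X * z. Proof. unfold X; rewrite mA; reflexivity. Qed.
Lemma bb z : b * (b * z) == Y * z. Proof. unfold Y; rewrite mA; reflexivity. Qed.

Lemma aY : a * Y == Y^-1 * a.
Proof.
  assert (E : Y * (a * Y) == a).
  { transitivity (evalH H a b rel1 * a).
    - unfold Y; simpl. ar. rewrite m1l, mVl, m1r. reflexivity.
    - rewrite h1. apply m1l. }
  transitivity (Y^-1 * (Y * (a * Y))). symmetry; apply cancl.
  rewrite E; reflexivity.
Qed.

Lemma bX : b * X == X^-1 * b.
Proof.
  assert (E0 : X * (b^-1 * (X * b)) == one).
  { rewrite <- h2. unfold X; simpl. ar. rewrite m1r. reflexivity. }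
  apply inv_uniq in E0.
  assert (E1 : X * b == b * X^-1).
  { rewrite <- E0. symmetry. apply cancr. }
  assert (E : X * (b * X) == b).
  { rewrite mA, E1. ar. rewrite mVl, m1r. reflexivity. }
  transitivity (X^-1 * (X * (b * X))). symmetry; apply cancl.
  rewrite E; reflexivity.
Qed.

Lemma aX : a * X == X * a. Proof. unfold X. ar. reflexivity. Qed.
Lemma bY : b * Y == Y * b. Proof. unfold Y. ar. reflexivity. Qed.
Lemma aYi : a * Y^-1 == Y * a.
Proof. rewrite (conj_inv _ _ _ _ aY). rewrite invinv. reflexivity. Qed.
Lemma bXi : b * X^-1 == X * b.
Proof. rewrite (conj_inv _ _ _ _ bX). rewrite invinv. reflexivity. Qed.
Lemma aXi : a * X^-1 == X^-1 * a. Proof. apply conj_inv, aX. Qed.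
Lemma bYi : b * Y^-1 == Y^-1 * b. Proof. apply conj_inv, bY. Qed.

Lemma XY : X * Y == Y * X.
Proof.
  unfold X at 1. rewrite <- mA, aY, mA, aYi. rewrite <- mA. reflexivity.
Qed.
Lemma YXi : Y * X^-1 == X^-1 * Y. Proof. apply conj_inv. symmetry; apply XY. Qed.
Lemma XYi : X * Y^-1 == Y^-1 * X. Proof. apply conj_inv. apply XY. Qed.

Lemma cX : c * X == X^-1 * c.
Proof. unfold c. rewrite <- mA, bX, mA, aXi. ar. reflexivity. Qed.
Lemma cY : c * Y == Y^-1 * c.
Proof. unfold c. rewrite <- mA, bY, mA, aY. ar. reflexivity. Qed.
Lemma cXi : c * X^-1 == X * c.
Proof. rewrite (conj_inv _ _ _ _ cX), invinv. reflexivity. Qed.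
Lemma cYi : c * Y^-1 == Y * c.
Proof. rewrite (conj_inv _ _ _ _ cY), invinv. reflexivity. Qed.
Lemma WX : W * X == X * W.
Proof. unfold W. rewrite <- mA, cX, mA, cXi. ar. reflexivity. Qed.
Lemma WY : W * Y == Y * W.
Proof. unfold W. rewrite <- mA, cY, mA, cYi. ar. reflexivity. Qed.

Lemma aW : a * W == W^-1 * a.
Proof.
  assert (E : W * (a * W) == a).
  { unfold W, c. ar.
    rewrite (aa (b * (a * b))).
    rewrite (zf _ _ _ _ bX).
    rewrite (zf _ _ _ _ aXi).
    rewrite bb, (zf _ _ _ _ aY), aa.
    rewrite <- (zf _ _ _ _ XYi). rewrite cancl.
    rewrite (zf _ _ _ _ bYi). change (b * b) with Y. rewrite mVl, m1r. reflexivity. }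
  transitivity (W^-1 * (W * (a * W))). symmetry; apply cancl.
  rewrite E; reflexivity.
Qed.

Lemma bW : b * W == W^-1 * b.
Proof.
  assert (E : W * (b * W) == b).
  { unfold W, c. ar.
    rewrite (bb (a * (b * (a * b)))).
    rewrite (zf _ _ _ _ aY), aa.
    rewrite (zf _ _ _ _ bYi), (zf _ _ _ _ bX), bb.
    rewrite <- (zf _ _ _ _ YXi), cancl.
    rewrite (zf _ _ _ _ aXi), aa, cancl. reflexivity. }
  transitivity (W^-1 * (W * (b * W))). symmetry; apply cancl.
  rewrite E; reflexivity.
Qed.


Definition T (A B C : Z) := zpow H X A * (zpow H Y B * zpow H W C).

Lemma T_ext A B C A' B' C' : A = A' -> B = B' -> C = C' -> T A B C == T A' B' C'.
Proof. intros; subst; reflexivity. Qed.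

Lemma Tmul A B C A' B' C' : T A B C * T A' B' C' == T (A+A') (B+B') (C+C').
Proof.
  unfold T. rewrite !zpow_add. ar.
  rewrite (zf _ _ _ _ (zpow_comm H W X C A' WX)).
  rewrite (zf _ _ _ _ (zpow_comm H Y X B A' (geq_sym _ _ _ XY))).
  rewrite (zf _ _ _ _ (zpow_comm H W Y C B' WY)). reflexivity.
Qed.

Lemma T0 : T 0 0 0 == one.
Proof. unfold T. rewrite !zpow0, !m1l. reflexivity. Qed.

Lemma TX : T 1 0 0 == X. Proof. unfold T. rewrite zpow_1, !zpow0, !m1l, m1r. reflexivity. Qed.
Lemma TXi : T (-1) 0 0 == X^-1. Proof. unfold T. rewrite zpow_m1, !zpow0, !m1l, m1r. reflexivity. Qed.
Lemma TY : T 0 1 0 == Y. Proof. unfold T. rewrite zpow_1, !zpow0, !m1l, m1r. reflexivity. Qed.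
Lemma TYi : T 0 (-1) 0 == Y^-1. Proof. unfold T. rewrite zpow_m1, !zpow0, !m1l, m1r. reflexivity. Qed.
Lemma TWi : T 0 0 (-1) == W^-1. Proof. unfold T. rewrite zpow_m1, !zpow0, !m1l. reflexivity. Qed.

Lemma aT A B C : a * T A B C == T A (-B) (-C) * a.
Proof.
  unfold T. rewrite mA, (zpow_conj H _ _ _ A aX). ar. apply gmul_compat; [reflexivity|].
  rewrite mA, (zpow_conj H _ _ _ B aY), zpow_inv. ar. apply gmul_compat; [reflexivity|].
  rewrite (zpow_conj H _ _ _ C aW), zpow_inv. reflexivity.
Qed.

Lemma bT A B C : b * T A B C == T (-A) B (-C) * b.
Proof.
  unfold T. rewrite mA, (zpow_conj H _ _ _ A bX), zpow_inv. ar. apply gmul_compat; [reflexivity|].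
  rewrite mA, (zpow_conj H _ _ _ B bY). ar. apply gmul_compat; [reflexivity|].
  rewrite (zpow_conj H _ _ _ C bW), zpow_inv. reflexivity.
Qed.

Lemma ainv : a^-1 == X^-1 * a.
Proof. symmetry. apply inv_uniq. rewrite mA, aXi. ar. change (a * a) with X. apply mVl. Qed.
Lemma binv : b^-1 == Y^-1 * b.
Proof. symmetry. apply inv_uniq. rewrite mA, bYi. ar. change (b * b) with Y. apply mVl. Qed.

Definition baseH (r : Rt) : gcar H :=
  match r with Q0 => one | Q1 => X * b | Q2 => c | Q3 => a end.
Definition NFH (e : elt) : gcar H :=
  let '(r, A, B, C) := e in T A B C * baseH r.

Lemma bc : b * c == X^-1 * (W^-1 * a).
Proof.
  assert (E : b * c == a^-1 * W).
  { unfold W. rewrite <- (cancl H a (b * c)). apply gmul_compat; [reflexivity|].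
    unfold c at 2. ar. reflexivity. }
  rewrite E, ainv, <- mA, aW. reflexivity.
Qed.

Lemma ba : b * a == X^-1 * (W^-1 * (Y * c)).
Proof.
  transitivity ((b * c) * b^-1).
  { unfold c. ar. rewrite mVr, m1r. reflexivity. }
  rewrite bc, binv. repeat rewrite <- mA. rewrite (zf _ _ _ _ aYi). reflexivity.
Qed.

Definition letterH (g : gen2) (inv : bool) : gcar H :=
  match g, inv with
  | GU, false => a | GU, true => a^-1 | GV, false => b | GV, true => b^-1 end.

Lemma finish A B C d1 d2 d3 g A' B' C' :
  (A + d1 = A')%Z -> (B + d2 = B')%Z -> (C + d3 = C')%Z ->
  T A B C * (T d1 d2 d3 * g) == T A' B' C' * g.
Proof.
  intros. rewrite mA, Tmul. apply gmul_compat; [|reflexivity]. apply T_ext; lia.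
Qed.

Lemma uL_ok e : a * NFH e == NFH (uL e).
Proof.
  destruct e as [[[r A] B] C]. unfold NFH, uL.
  rewrite mA, aT. repeat rewrite <- mA.
  destruct r; simpl.
  - rewrite m1r. reflexivity.
  - rewrite (zf _ _ _ _ aX), <- TX. apply finish; lia.
  - unfold c. rewrite aa. reflexivity.
  - change (a * a) with X. rewrite <- (m1r H X), <- TX. apply finish; lia.
Qed.

Lemma vL_ok e : b * NFH e == NFH (vL e).
Proof.
  destruct e as [[[r A] B] C]. unfold NFH, vL.
  rewrite mA, bT. repeat rewrite <- mA.
  destruct r; simpl.
  - rewrite m1r. rewrite <- (cancl H X b) at 1. rewrite <- TXi. apply finish; lia.
  - rewrite (zf _ _ _ _ bX). change (b * b) with Y. rewrite <- (m1r H Y).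
    rewrite mA, <- TXi, <- TY, Tmul. apply finish; lia.
  - rewrite bc, <- TXi, <- TWi, mA, Tmul. apply finish; lia.
  - rewrite ba, <- TXi, <- TWi, <- TY, mA, Tmul, mA, Tmul. apply finish; lia.
Qed.

Lemma letter_okH g inv e : letterH g inv * NFH e == NFH (mulL g inv e).
Proof.
  destruct g, inv; simpl.
  - rewrite ainv. repeat rewrite <- mA. rewrite uL_ok. destruct (uL e) as [[[r A] B] C]. simpl.
    rewrite <- TXi. apply finish; lia.
  - apply uL_ok.
  - rewrite binv. repeat rewrite <- mA. rewrite vL_ok. destruct (vL e) as [[[r A] B] C]. simpl.
    rewrite <- TYi. apply finish; lia.
  - apply vL_ok.
Qed.

Lemma evalH_NF w : evalH H a b w == NFH (elemOf w).
Proof.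
  induction w as [|[g inv] w IH]; simpl.
  - rewrite T0, m1l. reflexivity.
  - rewrite IH. exact (letter_okH g inv (elemOf w)).
Qed.

End Pres.


Open Scope R_scope.

Lemma v3inj (a b c a' b' c' : R) : (a,b,c) = (a',b',c') -> a=a' /\ b=b' /\ c=c'.
Proof. intro E; inversion E; auto. Qed.

Lemma izr0 (k : Z) : IZR k = 0 -> k = 0%Z.
Proof. apply eq_IZR_R0. Qed.

Lemma fix_eid e p : appE e p = p -> e = eid.
Proof.
  destruct e as [[[r A] B] C]; destruct p as [[x y] z].
  destruct r; cbv beta iota zeta delta [appE rotR vadd IZR3 transZ rt eid];
  intro E; apply v3inj in E; destruct E as [E1 [E2 E3]].
  - assert (IZR (4*A) = 0) by lra. assert (IZR (4*B) = 0) by lra.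
    assert (IZR (-8*C) = 0) by lra.
    repeat match goal with Hh : IZR _ = 0 |- _ => apply izr0 in Hh end.
    assert (A = 0%Z) by lia; assert (B = 0%Z) by lia; assert (C = 0%Z) by lia; subst; reflexivity.
  - assert (IZR (4*B+2) = 0) by lra. apply izr0 in H. lia.
  - assert (IZR (-8*C-4) = 0) by lra. apply izr0 in H. lia.
  - assert (IZR (4*A+2) = 0) by lra. apply izr0 in H. lia.
Qed.

Lemma ib (q : R) (k : Z) : Rabs q < 2 -> Rabs (q + IZR k) < 2 ->
  (Z.abs k < 4)%Z /\ IZR (Z.abs k) <= Rabs q + Rabs (q + IZR k).
Proof.
  intros H1 H2. rewrite abs_IZR.
  assert (Rabs (IZR k) <= Rabs q + Rabs (q + IZR k)).
  { split_Rabs; lra. }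
  split; auto. apply lt_IZR. rewrite abs_IZR. simpl. lra.
Qed.

Lemma int_eid e p : TO_interior p -> TO_interior (appE e p) -> e = eid.
Proof.
  destruct e as [[[r A] B] C]; destruct p as [[x y] z].
  destruct r; cbv beta iota zeta delta [appE rotR vadd IZR3 transZ rt eid TO_interior];
  intros [Hx [Hy [Hz Hs]]] [Hx' [Hy' [Hz' Hs']]];
  pose proof (Rabs_Ropp x); pose proof (Rabs_Ropp y); pose proof (Rabs_Ropp z);
  assert (Rabs (-x) < 2) by lra; assert (Rabs (-y) < 2) by lra; assert (Rabs (-z) < 2) by lra;
  repeat match goal with
  | Ha : Rabs ?q < 2, Hb : Rabs (?q + IZR ?k) < 2 |- _ =>
      destruct (ib q k Ha Hb); clear Hb
  end;
  match goal with
  | Ha : IZR (Z.abs ?k1) <= _, Hb : IZR (Z.abs ?k2) <= _, Hc : IZR (Z.abs ?k3) <= _ |- _ =>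
    assert (Hsum : IZR (Z.abs k1 + Z.abs k2 + Z.abs k3) < IZR 6) by (rewrite !plus_IZR; lra)
  end;
  apply lt_IZR in Hsum;
  first [ exfalso; lia
        | assert (A = 0%Z) by lia; assert (B = 0%Z) by lia; assert (C = 0%Z) by lia;
          subst; reflexivity ].
Qed.

Fixpoint rep (n : nat) (w : word gen2) : word gen2 :=
  match n with O => nil | S n => w ++ rep n w end.
Definition repZ (k : Z) (w wi : word gen2) : word gen2 :=
  if Z.leb 0 k then rep (Z.to_nat k) w else rep (Z.to_nat (- k)) wi.
Definition wuu : word gen2 := (GU,false) :: (GU,false) :: nil.
Definition wuiui : word gen2 := (GU,true) :: (GU,true) :: nil.
Definition wvv : word gen2 := (GV,false) :: (GV,false) :: nil.
Definition wvivi : word gen2 := (GV,true) :: (GV,true) :: nil.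
Definition wuvuv : word gen2 := (GU,false) :: (GV,false) :: (GU,false) :: (GV,false) :: nil.
Definition wuvuvi : word gen2 := (GV,true) :: (GU,true) :: (GV,true) :: (GU,true) :: nil.
Definition baseW (r : Rt) : word gen2 :=
  match r with
  | Q0 => nil | Q1 => (GU,false) :: (GU,false) :: (GV,false) :: nil
  | Q2 => (GU,false) :: (GV,false) :: nil | Q3 => (GU,false) :: nil end.
Definition nfW (e : elt) : word gen2 :=
  let '(r,A,B,C) := e in repZ A wuu wuiui ++ repZ B wvv wvivi ++ repZ C wuvuv wuvuvi ++ baseW r.

Definition GF := gens2 uf uif vf vif.

Lemma evalW_app w1 w2 p : evalW GF (w1 ++ w2) p = evalW GF w1 (evalW GF w2 p).
Proof. induction w1 as [|[a b] w1 IH]; simpl; [reflexivity|]. rewrite IH; reflexivity. Qed.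

Definition trl (a b c : R) (p : V3) : V3 := let '(x,y,z) := p in (x+a, y+b, z+c).

Lemma rep_tr w (a b c : R) : (forall p, evalW GF w p = trl a b c p) ->
  forall n p, evalW GF (rep n w) p = trl (INR n * a) (INR n * b) (INR n * c) p.
Proof.
  intros Hw n. induction n as [|n IH]; intro p; destruct p as [[x y] z]; simpl rep.
  - simpl. apply v3eq; ring.
  - rewrite evalW_app, IH, Hw. rewrite S_INR. unfold trl. apply v3eq; ring.
Qed.

Lemma repZ_tr w wi (a b c : R) : (forall p, evalW GF w p = trl a b c p) ->
  (forall p, evalW GF wi p = trl (-a) (-b) (-c) p) ->
  forall k p, evalW GF (repZ k w wi) p = trl (IZR k * a) (IZR k * b) (IZR k * c) p.
Proof.
  intros Hw Hwi k p. unfold repZ. destruct (Z.leb_spec 0 k).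
  - rewrite (rep_tr w a b c Hw). rewrite INR_IZR_INZ, Z2Nat.id by lia. reflexivity.
  - rewrite (rep_tr wi (-a) (-b) (-c) Hwi). rewrite INR_IZR_INZ, Z2Nat.id by lia.
    rewrite opp_IZR. destruct p as [[x y] z]. unfold trl. apply v3eq; ring.
Qed.

Ltac cbvall := cbv beta iota zeta delta [evalW GF gens2 uf uif vf vif trl wuu wuiui wvv wvivi wuvuv wuvuvi appE rotR vadd IZR3 transZ rt baseW].

Lemma nfW_ok e p : evalW GF (nfW e) p = appE e p.
Proof.
  destruct e as [[[r A] B] C]. unfold nfW. rewrite !evalW_app.
  rewrite (repZ_tr wuu wuiui 4 0 0), (repZ_tr wvv wvivi 0 4 0), (repZ_tr wuvuv wuvuvi 0 0 (-8)).
  - destruct p as [[x y] z]; destruct r; cbvall; apply v3eq; zr2; ring.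
  - intros [[x y] z]; cbvall; apply v3eq; ring.
  - intros [[x y] z]; cbvall; apply v3eq; ring.
  - intros [[x y] z]; cbvall; apply v3eq; ring.
  - intros [[x y] z]; cbvall; apply v3eq; ring.
  - intros [[x y] z]; cbvall; apply v3eq; ring.
  - intros [[x y] z]; cbvall; apply v3eq; ring.
Qed.

Lemma latt n1 n2 n3 : (n1 mod 2 = n3 mod 2)%Z -> (n2 mod 2 = n3 mod 2)%Z ->
  exists e, forall p, appE e p = rotR (rt e) (vsub p (IZR (2*n1), IZR (2*n2), IZR (2*n3))).
Proof.
  intros P1 P2.
  assert (Hm : (n3 mod 4 = 0 \/ n3 mod 4 = 1 \/ n3 mod 4 = 2 \/ n3 mod 4 = 3)%Z).
  { pose proof (Z.mod_pos_bound n3 4). lia. }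
  destruct Hm as [Hm|[Hm|[Hm|Hm]]].
  - exists (Q0, (-(n1/2))%Z, (-(n2/2))%Z, (n3/4)%Z).
    assert (E1 : (4 * (-(n1/2)) = -(2*n1))%Z) by (Z.div_mod_to_equations; lia).
    assert (E2 : (4 * (-(n2/2)) = -(2*n2))%Z) by (Z.div_mod_to_equations; lia).
    assert (E3 : (-8 * (n3/4) = -(2*n3))%Z) by (Z.div_mod_to_equations; lia).
    intros [[x y] z]. cbv beta iota zeta delta [appE rotR vadd vsub IZR3 transZ rt].
    rewrite E1, E2, E3. apply v3eq; zr2; ring.
  - exists (Q1, ((n1-1)/2)%Z, ((-n2-1)/2)%Z, ((1-n3)/4)%Z).
    assert (E1 : (4 * ((n1-1)/2) + 2 = 2*n1)%Z) by (Z.div_mod_to_equations; lia).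
    assert (E2 : (4 * ((-n2-1)/2) + 2 = -(2*n2))%Z) by (Z.div_mod_to_equations; lia).
    assert (E3 : (-8 * ((1-n3)/4) + 2 = 2*n3)%Z) by (Z.div_mod_to_equations; lia).
    intros [[x y] z]. cbv beta iota zeta delta [appE rotR vadd vsub IZR3 transZ rt].
    rewrite E1, E2, E3. apply v3eq; zr2; ring.
  - exists (Q2, (n1/2)%Z, (n2/2)%Z, ((n3-2)/4)%Z).
    assert (E1 : (4 * (n1/2) = 2*n1)%Z) by (Z.div_mod_to_equations; lia).
    assert (E2 : (4 * (n2/2) = 2*n2)%Z) by (Z.div_mod_to_equations; lia).
    assert (E3 : (-8 * ((n3-2)/4) - 4 = -(2*n3))%Z) by (Z.div_mod_to_equations; lia).
    intros [[x y] z]. cbv beta iota zeta delta [appE rotR vadd vsub IZR3 transZ rt].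
    rewrite E1, E2, E3. apply v3eq; zr2; ring.
  - exists (Q3, ((-n1-1)/2)%Z, ((n2-1)/2)%Z, ((-1-n3)/4)%Z).
    assert (E1 : (4 * ((-n1-1)/2) + 2 = -(2*n1))%Z) by (Z.div_mod_to_equations; lia).
    assert (E2 : (4 * ((n2-1)/2) + 2 = 2*n2)%Z) by (Z.div_mod_to_equations; lia).
    assert (E3 : (-8 * ((-1-n3)/4) - 2 = 2*n3)%Z) by (Z.div_mod_to_equations; lia).
    intros [[x y] z]. cbv beta iota zeta delta [appE rotR vadd vsub IZR3 transZ rt].
    rewrite E1, E2, E3. apply v3eq; zr2; ring.
Qed.

Lemma TO_rot r v : TO v -> TO (rotR r v).
Proof.
  destruct v as [[x y] z]; destruct r; simpl; rewrite ?Rabs_Ropp; auto.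
Qed.

Lemma floor4 (y : R) : exists m : Z, -2 <= y - 4 * IZR m <= 2.
Proof.
  destruct (archimed (y/4 + 1/2)) as [H1 H2].
  exists (up (y/4 + 1/2) - 1)%Z. rewrite minus_IZR. simpl. lra.
Qed.

Definition sgn (a : R) : Z := if Rle_dec 0 a then 1%Z else (-1)%Z.

Lemma sgn_abs a : -2 <= a <= 2 -> Rabs (a - 2 * IZR (sgn a)) = 2 - Rabs a.
Proof.
  intro. unfold sgn. destruct (Rle_dec 0 a); simpl; split_Rabs; lra.
Qed.

Lemma sgn_odd a : (((2 * 0 + sgn a) mod 2) = 1)%Z.
Proof. unfold sgn; destruct (Rle_dec 0 a); reflexivity. Qed.

Lemma cover (p : V3) : exists e, TO (appE e p).
Proof.
  destruct p as [[x y] z].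
  destruct (floor4 x) as [m1 H1]; destruct (floor4 y) as [m2 H2]; destruct (floor4 z) as [m3 H3].
  set (a1 := x - 4 * IZR m1) in *; set (a2 := y - 4 * IZR m2) in *; set (a3 := z - 4 * IZR m3) in *.
  destruct (Rle_dec (Rabs a1 + Rabs a2 + Rabs a3) 3) as [Hs|Hs].
  - destruct (latt (2*m1) (2*m2) (2*m3)) as [e He].
    { Z.div_mod_to_equations; lia. } { Z.div_mod_to_equations; lia. }
    exists e. rewrite He. apply TO_rot.
    cbv beta iota zeta delta [vsub]. rewrite !mult_IZR.
    replace (x - 2 * (2 * IZR m1)) with a1 by (unfold a1; simpl; ring).
    replace (y - 2 * (2 * IZR m2)) with a2 by (unfold a2; simpl; ring).
    replace (z - 2 * (2 * IZR m3)) with a3 by (unfold a3; simpl; ring).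
    simpl. repeat split; try (split_Rabs; lra); lra.
  - set (s1 := sgn a1); set (s2 := sgn a2); set (s3 := sgn a3).
    assert (O1 : ((2*m1 + s1) mod 2 = 1)%Z).
    { unfold s1, sgn; destruct (Rle_dec 0 a1); Z.div_mod_to_equations; lia. }
    assert (O2 : ((2*m2 + s2) mod 2 = 1)%Z).
    { unfold s2, sgn; destruct (Rle_dec 0 a2); Z.div_mod_to_equations; lia. }
    assert (O3 : ((2*m3 + s3) mod 2 = 1)%Z).
    { unfold s3, sgn; destruct (Rle_dec 0 a3); Z.div_mod_to_equations; lia. }
    destruct (latt (2*m1+s1) (2*m2+s2) (2*m3+s3)) as [e He]; try lia.
    exists e. rewrite He. apply TO_rot.
    cbv beta iota zeta delta [vsub]. rewrite !mult_IZR, !plus_IZR, !mult_IZR.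
    replace (x - 2 * (2 * IZR m1 + IZR s1)) with (a1 - 2 * IZR s1) by (unfold a1; simpl; ring).
    replace (y - 2 * (2 * IZR m2 + IZR s2)) with (a2 - 2 * IZR s2) by (unfold a2; simpl; ring).
    replace (z - 2 * (2 * IZR m3 + IZR s3)) with (a3 - 2 * IZR s3) by (unfold a3; simpl; ring).
    unfold s1, s2, s3. simpl.
    rewrite !sgn_abs by lra. repeat split; try (split_Rabs; lra); lra.
Qed.

Definition rotZ (r : Rt) (p : Z*Z*Z) : Z*Z*Z := let '(x,y,z) := p in
  match r with Q0 => (x,y,z) | Q1 => (-x,y,-z) | Q2 => (-x,-y,z) | Q3 => (x,-y,-z) end%Z.
Definition addZ3 (p q : Z*Z*Z) : Z*Z*Z :=
  let '(a,b,c) := p in let '(a',b',c') := q in (a+a', b+b', c+c')%Z.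
Definition subZ3 (p q : Z*Z*Z) : Z*Z*Z :=
  let '(a,b,c) := p in let '(a',b',c') := q in (a-a', b-b', c-c')%Z.
Definition appZ (e : elt) (p : Z*Z*Z) : Z*Z*Z := addZ3 (rotZ (rt e) p) (transZ e).

Lemma appE_IZR e p : appE e (IZR3 p) = IZR3 (appZ e p).
Proof.
  destruct e as [[[r A] B] C]; destruct p as [[x y] z]; destruct r;
  cbv beta iota zeta delta [appE appZ addZ3 rotR rotZ vadd IZR3 transZ rt];
  apply v3eq; zr2; ring.
Qed.

Lemma IZR3_inj p q : IZR3 p = IZR3 q -> p = q.
Proof.
  destruct p as [[a b] c]; destruct q as [[a' b'] c']. simpl. intro E.
  apply v3inj in E. destruct E as [E1 [E2 E3]].
  apply eq_IZR in E1; apply eq_IZR in E2; apply eq_IZR in E3. subst; reflexivity.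
Qed.

Lemma elt_eq (r : Rt) (A B C A' B' C' : Z) : A = A' -> B = B' -> C = C' -> (r,A,B,C) = (r,A',B',C').
Proof. intros; subst; reflexivity. Qed.

Definition cand (r : Rt) (p q : Z*Z*Z) : elt :=
  let '(d1,d2,d3) := subZ3 (subZ3 q (rotZ r p)) (transZ (r,0,0,0)%Z) in
  (r, (d1/4), (d2/4), (-(d3/8)))%Z.

Lemma cand_ok r A B C p : cand r p (appZ (r,A,B,C) p) = (r,A,B,C).
Proof.
  destruct p as [[x y] z]; destruct r;
  cbv beta iota zeta delta [cand appZ addZ3 subZ3 rotZ transZ rt];
  apply elt_eq; Z.div_mod_to_equations; lia.
Qed.

Definition eq3 (p q : Z*Z*Z) : bool :=
  let '(a,b,c) := p in let '(a',b',c') := q in (Z.eqb a a' && Z.eqb b b' && Z.eqb c c').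
Lemma eq3_true p q : eq3 p q = true <-> p = q.
Proof.
  destruct p as [[a b] c]; destruct q as [[a' b'] c']; simpl.
  rewrite !andb_true_iff, !Z.eqb_eq. split.
  - intros [[-> ->] ->]; reflexivity.
  - intro E; inversion E; auto.
Qed.

Definition elB (p1 p2 q1 q2 : Z*Z*Z) (r : Rt) : bool :=
  let e := cand r p1 q1 in eq3 (appZ e p1) q1 && eq3 (appZ e p2) q2.
Definition pairB (p1 p2 q1 q2 : Z*Z*Z) : bool := existsb (elB p1 p2 q1 q2) [Q0; Q1; Q2; Q3].

Lemma pairB_spec p1 p2 q1 q2 :
  pairB p1 p2 q1 q2 = true <-> exists e, appZ e p1 = q1 /\ appZ e p2 = q2.
Proof.
  unfold pairB. rewrite existsb_exists. split.
  - intros [r [_ Hr]]. unfold elB in Hr. apply andb_true_iff in Hr.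
    rewrite !eq3_true in Hr. eexists; exact Hr.
  - intros [[[[r A] B] C] [E1 E2]]. exists r. split.
    + destruct r; simpl; tauto.
    + unfold elB. rewrite <- E1, cand_ok. rewrite E1, E2.
      apply andb_true_iff; rewrite !eq3_true; auto.
Qed.

Definition gw (w : word gen2) := evalW GF w.

Lemma pairB_G p1 p2 q1 q2 :
  pairB p1 p2 q1 q2 = true <->
  exists w, gw w (IZR3 p1) = IZR3 q1 /\ gw w (IZR3 p2) = IZR3 q2.
Proof.
  rewrite pairB_spec. split.
  - intros [e [E1 E2]]. exists (nfW e). unfold gw. rewrite !nfW_ok, !appE_IZR, E1, E2. auto.
  - intros [w [E1 E2]]. exists (elemOf w). unfold gw, GF in *.
    rewrite !evalW_elem, !appE_IZR in *. split; apply IZR3_inj; auto.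
Qed.

Definition rangeZ : list Z := [(-2)%Z; (-1)%Z; 0%Z; 1%Z; 2%Z].
Definition allZ3 : list (Z*Z*Z) := list_prod (list_prod rangeZ rangeZ) rangeZ.
Definition vertb (p : Z*Z*Z) : bool :=
  let '(a,b,c) := p in
  (Z.abs a + Z.abs b + Z.abs c =? 3)%Z && (a*b*c =? 0)%Z && (a*a+b*b+c*c =? 5)%Z.
Definition vertZ : list (Z*Z*Z) := filter vertb allZ3.

Lemma in_range (a : Z) : (-2 <= a <= 2)%Z -> In a rangeZ.
Proof. intro. assert (a = -2 \/ a = -1 \/ a = 0 \/ a = 1 \/ a = 2)%Z as [E|[E|[E|[E|E]]]] by lia; subst; simpl; tauto. Qed.

Lemma vertZ_iff k : In k vertZ <-> vertb k = true.
Proof.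
  unfold vertZ. rewrite filter_In. split; [tauto|]. intro Hv. split; auto.
  destruct k as [[a b] c]. simpl in Hv. rewrite !andb_true_iff, !Z.eqb_eq in Hv.
  unfold allZ3. rewrite !in_prod_iff. repeat split; apply in_range; nia.
Qed.

Lemma vertex_IZR k : TO_vertex (IZR3 k) <-> vertb k = true.
Proof.
  destruct k as [[a b] c]. unfold TO_vertex, IZR3, vertb.
  rewrite !Rabs_Zabs, <- !plus_IZR, <- !mult_IZR, <- !plus_IZR.
  rewrite !andb_true_iff, !Z.eqb_eq. split.
  - intros [E1 [E2 E3]]. apply eq_IZR in E1; apply eq_IZR in E2; apply eq_IZR in E3. tauto.
  - intros [[E1 E2] E3]. rewrite E1, E2, E3. tauto.
Qed.

Definition isI (t : R) := exists k : Z, t = IZR k.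

Lemma absI t : Rabs t = 1 \/ Rabs t = 2 -> isI t.
Proof.
  intros [E|E]; destruct (Rle_dec 0 t).
  - exists 1%Z. rewrite Rabs_right in E by lra. simpl; lra.
  - exists (-1)%Z. rewrite Rabs_left in E by lra. simpl; lra.
  - exists 2%Z. rewrite Rabs_right in E by lra. simpl; lra.
  - exists (-2)%Z. rewrite Rabs_left in E by lra. simpl; lra.
Qed.

Lemma pairI y z : Rabs y + Rabs z = 3 -> y * y + z * z = 5 -> isI y /\ isI z.
Proof.
  intros E1 E2.
  assert ((Rabs y - 1) * (Rabs y - 2) = 0) by (split_Rabs; nra).
  apply Rmult_integral in H. split; apply absI; lra.
Qed.

Lemma vertex_int p : TO_vertex p -> exists k, p = IZR3 k.
Proof.
  destruct p as [[x y] z]. intros [E1 [E2 E3]].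
  assert (I0 : isI 0) by (exists 0%Z; reflexivity).
  assert (Hc : isI x /\ isI y /\ isI z).
  { apply Rmult_integral in E2. destruct E2 as [E2|E2]; [apply Rmult_integral in E2; destruct E2 as [E2|E2]|].
    - subst x. rewrite Rabs_R0 in E1. destruct (pairI y z); auto; lra.
    - subst y. rewrite Rabs_R0 in E1. destruct (pairI x z); auto; lra.
    - subst z. rewrite Rabs_R0 in E1. destruct (pairI x y); auto; lra. }
  destruct Hc as [[a Ha] [[b Hb] [c Hc]]]. exists (a,b,c). subst; reflexivity.
Qed.

Lemma vertex_char p : TO_vertex p <-> exists k, In k vertZ /\ p = IZR3 k.
Proof.
  split.
  - intro Hp. destruct (vertex_int p Hp) as [k ->]. exists k. split; auto.
    apply vertZ_iff, vertex_IZR; auto.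
  - intros [k [Hk ->]]. apply vertex_IZR, vertZ_iff; auto.
Qed.

Fixpoint nodupb {A : Type} (eqb : A -> A -> bool) (l : list A) : bool :=
  match l with nil => true | x :: l' => negb (existsb (eqb x) l') && nodupb eqb l' end.

Lemma nodupb_ok {A : Type} (eqb : A -> A -> bool) (Hr : forall x, eqb x x = true) l :
  nodupb eqb l = true -> NoDup l.
Proof.
  induction l as [|x l IH]; simpl; intro Hb; constructor.
  - apply andb_true_iff in Hb. destruct Hb as [Hb _]. intro Hin.
    assert (existsb (eqb x) l = true) by (apply existsb_exists; eauto).
    rewrite H in Hb; discriminate.
  - apply andb_true_iff in Hb. apply IH; tauto.
Qed.

Lemma eq3_refl x : eq3 x x = true. Proof. apply eq3_true; reflexivity. Qed.

Definition vorb (k : Z*Z*Z) : list (Z*Z*Z) := filter (fun q => pairB k k q q) vertZ.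
Definition vcheck : bool :=
  forallb (fun k => (Nat.eqb (length (vorb k)) 4) && nodupb eq3 (vorb k)) vertZ.
Lemma vcheck_ok : vcheck = true. Proof. vm_compute. reflexivity. Qed.

Lemma IZR3_injective : FinFun.Injective IZR3.
Proof. intros p q; apply IZR3_inj. Qed.

Lemma vertex_classes p : TO_vertex p ->
  exists l : list V3, NoDup l /\ length l = 4%nat /\
    forall q, (TO_vertex q /\ exists w, gw w p = q) <-> In q l.
Proof.
  intro Hp. apply vertex_char in Hp. destruct Hp as [k [Hk ->]].
  pose proof vcheck_ok as C. unfold vcheck in C. rewrite forallb_forall in C.
  specialize (C k Hk). apply andb_true_iff in C. destruct C as [C1 C2].
  apply Nat.eqb_eq in C1.
  exists (map IZR3 (vorb k)). split; [|split].
  - apply FinFun.Injective_map_NoDup. apply IZR3_injective.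
    apply (nodupb_ok eq3 eq3_refl); auto.
  - rewrite length_map; auto.
  - intro q. split.
    + intros [Hq [w Hw]]. apply vertex_char in Hq. destruct Hq as [k' [Hk' ->]].
      apply in_map. unfold vorb. apply filter_In. split; auto.
      apply pairB_G. exists w; auto.
    + intro Hin. apply in_map_iff in Hin. destruct Hin as [k' [<- Hk']].
      unfold vorb in Hk'. apply filter_In in Hk'. destruct Hk' as [Hk' Hb].
      split. apply vertex_char; eauto.
      apply pairB_G in Hb. destruct Hb as [w [Hw _]]. eauto.
Qed.

Definition dist2Z (p q : Z*Z*Z) : Z :=
  let '(a,b,c) := p in let '(a',b',c') := q in ((a-a')*(a-a') + (b-b')*(b-b') + (c-c')*(c-c'))%Z.
Lemma dist2_IZR p q : dist2 (IZR3 p) (IZR3 q) = IZR (dist2Z p q).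
Proof.
  destruct p as [[a b] c]; destruct q as [[a' b'] c'].
  cbv beta iota zeta delta [dist2 dot vsub IZR3 dist2Z]. zr2. ring.
Qed.

Definition edgesZ : list ((Z*Z*Z)*(Z*Z*Z)) :=
  filter (fun pr => Z.eqb (dist2Z (fst pr) (snd pr)) 2) (list_prod vertZ vertZ).

Lemma edge_char q1 q2 : TO_edge q1 q2 <->
  exists k1 k2, In (k1,k2) edgesZ /\ q1 = IZR3 k1 /\ q2 = IZR3 k2.
Proof.
  unfold TO_edge. split.
  - intros [H1 [H2 H3]]. apply vertex_char in H1; apply vertex_char in H2.
    destruct H1 as [k1 [Hk1 ->]]; destruct H2 as [k2 [Hk2 ->]].
    exists k1, k2. split; auto. unfold edgesZ. apply filter_In. split.
    + apply in_prod; auto.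
    + simpl. rewrite dist2_IZR in H3. apply eq_IZR in H3. rewrite H3. reflexivity.
  - intros [k1 [k2 [Hin [-> ->]]]]. unfold edgesZ in Hin. apply filter_In in Hin.
    destruct Hin as [Hin Hd]. apply in_prod_iff in Hin. destruct Hin.
    split; [apply vertex_char; eauto|]. split; [apply vertex_char; eauto|].
    rewrite dist2_IZR. simpl in Hd. apply Z.eqb_eq in Hd. rewrite Hd. reflexivity.
Qed.

Definition IZR6 (pr : (Z*Z*Z)*(Z*Z*Z)) : V3 * V3 := (IZR3 (fst pr), IZR3 (snd pr)).
Definition eq6 (x y : (Z*Z*Z)*(Z*Z*Z)) : bool := eq3 (fst x) (fst y) && eq3 (snd x) (snd y).
Lemma eq6_refl x : eq6 x x = true.
Proof. unfold eq6; rewrite !eq3_refl; reflexivity. Qed.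

Definition eorb (k1 k2 : Z*Z*Z) :=
  filter (fun pr => pairB k1 k2 (fst pr) (snd pr) || pairB k1 k2 (snd pr) (fst pr)) edgesZ.
Definition echeck : bool :=
  forallb (fun pr => (Nat.eqb (length (eorb (fst pr) (snd pr))) 6) &&
                     nodupb eq6 (eorb (fst pr) (snd pr))) edgesZ.
Lemma echeck_ok : echeck = true. Proof. vm_compute. reflexivity. Qed.

Lemma IZR6_injective : FinFun.Injective IZR6.
Proof.
  intros [x1 x2] [y1 y2]. unfold IZR6; simpl. intro E. inversion E.
  apply IZR3_inj in H0; apply IZR3_inj in H1. subst; reflexivity.
Qed.

Lemma edge_classes p1 p2 : TO_edge p1 p2 ->
  exists l : list (V3 * V3), NoDup l /\ length l = 6%nat /\
    forall q1 q2,
      (TO_edge q1 q2 /\ exists w,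
         (gw w p1 = q1 /\ gw w p2 = q2) \/ (gw w p1 = q2 /\ gw w p2 = q1))
      <-> In (q1, q2) l.
Proof.
  intro Hp. apply edge_char in Hp. destruct Hp as [k1 [k2 [Hk [-> ->]]]].
  pose proof echeck_ok as C. unfold echeck in C. rewrite forallb_forall in C.
  specialize (C (k1,k2) Hk). apply andb_true_iff in C. destruct C as [C1 C2].
  apply Nat.eqb_eq in C1. simpl in C1, C2.
  exists (map IZR6 (eorb k1 k2)). split; [|split].
  - apply FinFun.Injective_map_NoDup. apply IZR6_injective.
    apply (nodupb_ok eq6 eq6_refl); auto.
  - rewrite length_map; auto.
  - intros q1 q2. split.
    + intros [Hq [w Hw]]. apply edge_char in Hq. destruct Hq as [k1' [k2' [Hk' [-> ->]]]].
      change (IZR3 k1', IZR3 k2') with (IZR6 (k1', k2')).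
      apply in_map. unfold eorb. apply filter_In. split; auto. simpl.
      apply orb_true_iff. destruct Hw as [Hw|Hw]; [left|right]; apply pairB_G; exists w; tauto.
    + intro Hin. apply in_map_iff in Hin. destruct Hin as [[k1' k2'] [E Hk']].
      unfold IZR6 in E; simpl in E. inversion E; subst q1 q2.
      unfold eorb in Hk'. apply filter_In in Hk'. destruct Hk' as [Hk' Hb].
      split. apply edge_char; eauto.
      simpl in Hb. apply orb_true_iff in Hb. destruct Hb as [Hb|Hb]; apply pairB_G in Hb;
      destruct Hb as [w Hw]; exists w; tauto.
Qed.

Definition Aphi : M3 := ((/4, 0, 0), (0, /4, 0), (0, 0, /8)).
Definition pphi : V3 := (/4, 0, /8).
Definition phi (x : V3) : V3 := vadd (mapply Aphi x) pphi.

Definition tr3 (l : gen2 * bool) : gen3 * bool :=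
  match l with (GU, b) => (S1, b) | (GV, b) => (S2, b) end.

Ltac cbvphi := cbv beta iota zeta delta [phi Aphi pphi vadd mapply dot std19 GF gens2 uf uif vf vif evalW].

Lemma phi_letter a b x : phi (GF a b x) = std19 (fst (tr3 (a,b))) (snd (tr3 (a,b))) (phi x).
Proof. destruct x as [[x y] z]; destruct a, b; cbvphi; simpl; apply v3eq; field. Qed.

Lemma phi_dir1 w : forall x, phi (evalW GF w x) = evalW std19 (map tr3 w) (phi x).
Proof.
  induction w as [|[a b] w IH]; intro x; [reflexivity|].
  simpl. rewrite phi_letter, IH. destruct a; reflexivity.
Qed.

Definition tw (l : gen3 * bool) : word gen2 :=
  match l with
  | (S1, b) => [(GU, b)]
  | (S2, b) => [(GV, b)]
  | (S3, false) => [(GV,true); (GU,true); (GV,true); (GU,true); (GU,false); (GV,false)]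
  | (S3, true) => [(GV,true); (GU,true); (GU,false); (GV,false); (GU,false); (GV,false)]
  end.

Lemma phi_tw l x : phi (evalW GF (tw l) x) = std19 (fst l) (snd l) (phi x).
Proof. destruct x as [[x y] z]; destruct l as [[] []]; cbvphi; simpl; apply v3eq; field. Qed.

Lemma phi_dir2 w' : forall x, phi (evalW GF (flat_map tw w') x) = evalW std19 w' (phi x).
Proof.
  induction w' as [|l w' IH]; intro x; [reflexivity|].
  simpl. rewrite evalW_app, phi_tw, IH. destruct l; reflexivity.
Qed.

Lemma P19 : is_P212121 uf uif vf vif.
Proof.
  exists Aphi, pphi. split.
  - cbv [det3 Aphi]. intro E. field_simplify in E. lra.
  - split.
    + intro w. exists (map tr3 w). intro x. apply (phi_dir1 w x).
    + intro w'. exists (flat_map tw w'). intro x. apply (phi_dir2 w' x).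
Qed.

Lemma appE_eid y : appE eid y = y.
Proof. destruct y as [[x y] z]. cbv beta iota zeta delta [appE eid rotR vadd IZR3 transZ rt]. apply v3eq; zr2; ring. Qed.

Lemma rot_ok (M : M3) : (forall p q, dot (mapply M p) (mapply M q) = dot p q) -> det3 M = 1 -> M <> I3 -> is_rotation M.
Proof. unfold is_rotation; auto. Qed.

Theorem mainTheorem2 :
  exists u ui v vi : V3 -> V3,
    is_screw u /\ is_screw v /\
    (forall x, u (ui x) = x /\ ui (u x) = x) /\
    (forall x, v (vi x) = x /\ vi (v x) = x) /\
    let g := fun w : word gen2 => evalW (gens2 u ui v vi) w in
    (forall w x, g w x = x -> forall y, g w y = y) /\
    (forall x, exists w, TO (g w x)) /\
    (forall w x, TO_interior x -> TO_interior (g w x) -> forall y, g w y = y) /\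
    (forall p, TO_vertex p ->
       exists l : list V3, NoDup l /\ length l = 4%nat /\
         forall q, (TO_vertex q /\ exists w, g w p = q) <-> In q l) /\
    (forall p1 p2, TO_edge p1 p2 ->
       exists l : list (V3 * V3), NoDup l /\ length l = 6%nat /\
         forall q1 q2,
           (TO_edge q1 q2 /\ exists w,
              (g w p1 = q1 /\ g w p2 = q2) \/ (g w p1 = q2 /\ g w p2 = q1))
           <-> In (q1, q2) l) /\
    is_P212121 u ui v vi /\
    has_presentation u ui v vi.
Proof.
  exists uf, uif, vf, vif.
  split; [|split; [|split; [|split]]].
  - exists ((1,0,0),(0,-1,0),(0,0,-1)), (0,1,-1), (1,0,0), 2.
    split; [apply rot_ok|].
    + intros [[a b] c] [[d e] f]. cbv [dot mapply]. ring.
    + cbv [det3]. ring.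
    + intro E. inversion E. lra.
    + split; [cbv [dot]; ring|]. split; [cbv [mapply dot]; apply v3eq; ring|].
      split; [lra|]. intros [[x y] z]. cbv [uf vadd mapply vsub dot vscale]. apply v3eq; ring.
  - exists ((-1,0,0),(0,1,0),(0,0,-1)), (-1,0,1), (0,1,0), 2.
    split; [apply rot_ok|].
    + intros [[a b] c] [[d e] f]. cbv [dot mapply]. ring.
    + cbv [det3]. ring.
    + intro E. inversion E. lra.
    + split; [cbv [dot]; ring|]. split; [cbv [mapply dot]; apply v3eq; ring|].
      split; [lra|]. intros [[x y] z]. cbv [vf vadd mapply vsub dot vscale]. apply v3eq; ring.
  - intros [[x y] z]; cbv [uf uif]; split; apply v3eq; ring.
  - intros [[x y] z]; cbv [vf vif]; split; apply v3eq; ring.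
  - cbv zeta. split; [|split; [|split; [|split; [|split; [|split]]]]].
    + intros w x Hx y. fold GF in *. rewrite evalW_elem in *. apply fix_eid in Hx.
      rewrite Hx. apply appE_eid.
    + intro x. fold GF. destruct (cover x) as [e He]. exists (nfW e). rewrite nfW_ok. exact He.
    + intros w x H1 H2 y. fold GF in *. rewrite evalW_elem in *. apply int_eid in H2; auto.
      rewrite H2. apply appE_eid.
    + intros p Hp. exact (vertex_classes p Hp).
    + intros p1 p2 Hp. exact (edge_classes p1 p2 Hp).
    + exact P19.
    + split; [|split].
      * intros [[x y] z]. cbv [evalW rel1 gens2 uf uif vf vif]. apply v3eq; ring.
      * intros [[x y] z]. cbv [evalW rel2 gens2 uf uif vf vif]. apply v3eq; ring.
      * intros H a b h1 h2 w Hw. fold GF in Hw.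
        assert (E : elemOf w = eid).
        { apply (fix_eid _ (0,0,0)). rewrite <- evalW_elem. apply Hw. }
        eapply geq_trans. apply (evalH_NF H a b h1 h2 w).
        rewrite E. unfold NFH, eid. eapply geq_trans.
        apply gmul_compat. apply (T0 H a b). apply geq_refl. apply gmul1.
Qed.
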